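(* Let $A=k\langle x_1,\dots,x_n\rangle/(R)$ be a quadratic algebra and $K$ a Hopf algebra such that $A$ is a right $K$-comodule algebra via $\rho_K(x_i)=\sum_{s=1}^n x_s\otimes a_{si}$, $a_{si}\in K$. Then the $K$-coaction is inner-faithful if and only if the assignment $y_{ij}\mapsto a_{ij}$ ($1\le i,j\le n$) induces a surjective Hopf algebra homomorphism $\mathcal O_A(GL)\to K$.
   Context: Let $R=\mathrm{span}\{r_w=\sum_{i,j}c_w^{ij}x_ix_j: w=1,\dots,m\}\subseteq V^{\otimes2}$, $V=A_1$, with the $r_w$ linearly independent; let $R^\perp\subseteq (V^* )^{\otimes2}$ be its annihilator, with basis $r'_u=\sum_{i,j}d_u^{ij}x_i^*x_j^*$, $u=1,\dots,n^2-m$. Let $F$ be the free algebra on $\{y_{ij}\}_{1\le i,j\le n}$ with bialgebra structure $\Delta(y_{ij})=\sum_s y_{is}\otimes y_{sj}$, $\epsilon(y_{ij})=\delta_{ij}$. The quantum matrix space is the bialgebra $\mathcal O_A(M)=F/I$, where $I$ is the ideal generated by $\sum_{i,j,k,l}c_w^{ij}d_u^{kl}y_{ki}y_{lj}$ for all $w,u$; it coacts on $A$ by $x_i\mapsto\sum_s x_s\otimes y_{si}$. The Hopf envelope of a bialgebra $B$ is a Hopf algebra $H(B)$ with a bialgebra map $\phi:B\to H(B)$ such that every bialgebra map from $B$ to a Hopf algebra $H'$ factors uniquely as a Hopf algebra map $H(B)\to H'$ composed with $\phi$. $\mathcal O_A(GL)$ is the Hopf envelope of $\mathcal O_A(M)$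 (which exists), and $y_{ij}$ also denotes the image of $y_{ij}$ in it. A right coaction $\rho$ on $A$ is inner-faithful if $\rho(A)\not\subseteq A\otimes K'$ for every proper Hopf subalgebra $K'\subsetneq K$. *)

(* Defs.v *)
From HB Require Import structures.
From mathcomp Require Import all_boot all_order all_algebra.
Set Implicit Arguments. Unset Strict Implicit. Unset Printing Implicit Defensive.
Import GRing.Theory.
Local Open Scope ring_scope.

Section HopfDefs.
Variable k : fieldType.

Definition lin_map (U W : lmodType k) (f : U -> W) : Prop :=
  forall (a : k) (u v : U), f (a *: u + v) = a *: f u + f v.
Definition lin_fun (U : lmodType k) (f : U -> k) : Prop :=
  forall (a : k) (u v : U), f (a *: u + v) = a * f u + f v.

Definition bilin (U V W : lmodType k) (b : U -> V -> W) : Prop :=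
  (forall v, lin_map (fun u => b u v)) /\ (forall u, lin_map (b u)).
Definition trilin (U V X W : lmodType k) (b : U -> V -> X -> W) : Prop :=
  (forall v x, lin_map (fun u => b u v x)) /\ (forall u x, lin_map (fun v => b u v x))
  /\ (forall u v, lin_map (b u v)).

(* An element of U (x)_k V is represented by a finite list of pairs
   (the finite sum of elementary tensors); two lists represent the same
   tensor iff every bilinear map takes the same value on them
   (universal property of the tensor product). *)
Definition teq (U V : lmodType k) (s t : seq (U * V)) : Prop :=
  forall (W : lmodType k) (b : U -> V -> W), bilin b ->
    \sum_(p <- s) b p.1 p.2 = \sum_(p <- t) b p.1 p.2.
Definition teq3 (U V X : lmodType k) (s t : seq (U * V * X)) : Prop :=
  forall (W : lmodType k) (b : U -> V -> X -> W), trilin b ->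
    \sum_(p <- s) b p.1.1 p.1.2 p.2 = \sum_(p <- t) b p.1.1 p.1.2 p.2.

Definition alg_hom (A B : algType k) (f : A -> B) : Prop :=
  lin_map f /\ f 1 = 1 /\ forall x y, f (x * y) = f x * f y.

Definition is_bialg (K : algType k) (D : K -> seq (K * K)) (e : K -> k) : Prop :=
  [/\ [/\ (forall a x y, teq (D (a *: x + y)) ([seq (a *: p.1, p.2) | p <- D x] ++ D y)),
      (forall x y, teq (D (x * y)) [seq (p.1 * q.1, p.2 * q.2) | p <- D x, q <- D y]),
      teq (D 1) [:: (1, 1)] &
      (forall x, teq3 [seq (q.1, q.2, p.2) | p <- D x, q <- D p.1]
                      [seq (p.1, q.1, q.2) | p <- D x, q <- D p.2])],
      [/\ lin_fun e, e 1 = 1 & forall x y, e (x * y) = e x * e y] &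
      (forall x, \sum_(p <- D x) e p.1 *: p.2 = x /\ \sum_(p <- D x) e p.2 *: p.1 = x)].

Definition is_hopf (K : algType k) (D : K -> seq (K * K)) (e : K -> k) (S : K -> K) : Prop :=
  is_bialg D e /\ lin_map S /\
  forall x, \sum_(p <- D x) S p.1 * p.2 = (e x)%:A /\ \sum_(p <- D x) p.1 * S p.2 = (e x)%:A.

Definition bialg_hom (A B : algType k) (DA : A -> seq (A * A)) (eA : A -> k)
  (DB : B -> seq (B * B)) (eB : B -> k) (f : A -> B) : Prop :=
  alg_hom f /\ (forall x, teq (DB (f x)) [seq (f p.1, f p.2) | p <- DA x]) /\
  (forall x, eB (f x) = eA x).

Definition hopf_hom (A B : algType k) (DA : A -> seq (A * A)) (eA : A -> k) (SA : A -> A)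
  (DB : B -> seq (B * B)) (eB : B -> k) (SB : B -> B) (f : A -> B) : Prop :=
  bialg_hom DA eA DB eB f /\ forall x, f (SA x) = SB (f x).

Definition hopf_sub (K : algType k) (D : K -> seq (K * K)) (e : K -> k) (S : K -> K)
  (P : K -> Prop) : Prop :=
  [/\ P 1, (forall a x y, P x -> P y -> P (a *: x + y)),
      (forall x y, P x -> P y -> P (x * y)), (forall x, P x -> P (S x)) &
      (forall x, P x -> exists t, teq (D x) t /\ forall p, p \in t -> P p.1 /\ P p.2)].

Definition comod_alg (A K : algType k) (DK : K -> seq (K * K)) (eK : K -> k)
  (rho : A -> seq (A * K)) : Prop :=
  [/\ (forall a x y, teq (rho (a *: x + y)) ([seq (a *: p.1, p.2) | p <- rho x] ++ rho y)),
      (forall x y, teq (rho (x * y)) [seq (p.1 * q.1, p.2 * q.2) | p <- rho x, q <- rho y]),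
      teq (rho 1) [:: (1, 1)],
      (forall x, teq3 [seq (q.1, q.2, p.2) | p <- rho x, q <- rho p.1]
                      [seq (p.1, q.1, q.2) | p <- rho x, q <- DK p.2]) &
      (forall x, \sum_(p <- rho x) eK p.2 *: p.1 = x)].

Definition tin_right (A K : algType k) (s : seq (A * K)) (P : K -> Prop) : Prop :=
  exists t, teq s t /\ forall p, p \in t -> P p.2.

Definition inner_faithful (A K : algType k) (DK : K -> seq (K * K)) (eK : K -> k)
  (SK : K -> K) (rho : A -> seq (A * K)) : Prop :=
  forall P : K -> Prop, hopf_sub DK eK SK P -> (exists z, ~ P z) ->
    ~ (forall x : A, tin_right (rho x) P).

Definition quad_rel n m (c : 'I_m -> 'I_n -> 'I_n -> k) (B : algType k) (b : 'I_n -> B) : Prop :=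
  forall w, \sum_(i < n) \sum_(j < n) c w i j *: (b i * b j) = 0.

(* A together with x_1..x_n is the quadratic algebra k<x_1..x_n>/(R),
   characterised by its universal property *)
Definition is_quadalg n m (c : 'I_m -> 'I_n -> 'I_n -> k) (A : algType k) (x : 'I_n -> A) : Prop :=
  quad_rel c x /\
  forall (B : algType k) (b : 'I_n -> B), quad_rel c b ->
    exists! f : A -> B, alg_hom f /\ forall i, f (x i) = b i.

Definition in_perp n m (c : 'I_m -> 'I_n -> 'I_n -> k) (d : 'I_n -> 'I_n -> k) : Prop :=
  forall w, \sum_(i < n) \sum_(j < n) c w i j * d i j = 0.

Definition OAM_rel n m (c : 'I_m -> 'I_n -> 'I_n -> k) (B : algType k)
  (z : 'I_n -> 'I_n -> B) : Prop :=
  forall w d, in_perp c d ->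
    \sum_(i < n) \sum_(j < n) \sum_(k0 < n) \sum_(l < n)
       (c w i j * d k0 l) *: (z k0 i * z l j) = 0.

Definition is_OAM n m (c : 'I_m -> 'I_n -> 'I_n -> k) (B : algType k)
  (DB : B -> seq (B * B)) (eB : B -> k) (y : 'I_n -> 'I_n -> B) : Prop :=
  [/\ is_bialg DB eB,
      (forall i j, teq (DB (y i j)) [seq (y i s, y s j) | s <- enum 'I_n]),
      (forall i j, eB (y i j) = (i == j)%:R),
      OAM_rel c y &
      (forall (C : algType k) (z : 'I_n -> 'I_n -> C), OAM_rel c z ->
         exists! f : B -> C, alg_hom f /\ forall i j, f (y i j) = z i j)].

Definition is_hopf_env (B : algType k) (DB : B -> seq (B * B)) (eB : B -> k)
  (H : algType k) (DH : H -> seq (H * H)) (eH : H -> k) (SH : H -> H) (phi : B -> H) : Prop :=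
  [/\ is_hopf DH eH SH, bialg_hom DB eB DH eH phi &
      forall (H' : algType k) (DH' : H' -> seq (H' * H')) (eH' : H' -> k) (SH' : H' -> H'),
        is_hopf DH' eH' SH' ->
        forall g : B -> H', bialg_hom DB eB DH' eH' g ->
          exists! h : H -> H', hopf_hom DH eH SH DH' eH' SH' h /\ forall b, h (phi b) = g b].

End HopfDefs.

(* Main.v *)
Require Import Defs.
From HB Require Import structures.
From mathcomp Require Import all_boot all_order all_algebra.
From mathcomp Require Import boolp.
From mathcomp Require classical_sets.
Import GRing.Theory.
Local Open Scope ring_scope.
Set Implicit Arguments. Unset Strict Implicit.

Section Lin.
Variable k : fieldType.

Section LinMap.
Variables (U W : lmodType k) (f : U -> W) (hf : lin_map f).
Lemma lm0 : f 0 = 0.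
Proof. by have := hf (-1) 0 0; rewrite scaler0 add0r scaleN1r addNr. Qed.
Lemma lmD u v : f (u + v) = f u + f v.
Proof. by have := hf 1 u v; rewrite !scale1r. Qed.
Lemma lmZ a u : f (a *: u) = a *: f u.
Proof. by have := hf a u 0; rewrite !addr0 lm0 addr0. Qed.
Lemma lmN u : f (- u) = - f u.
Proof. by rewrite -scaleN1r lmZ scaleN1r. Qed.
Lemma lm_sum (I : Type) (r : seq I) (F : I -> U) :
  f (\sum_(i <- r) F i) = \sum_(i <- r) f (F i).
Proof. elim: r => [|x r IH]; first by rewrite !big_nil lm0.
by rewrite !big_cons lmD IH. Qed.
End LinMap.

Section LinFun.
Variables (U : lmodType k) (f : U -> k) (hf : lin_fun f).
Lemma lf_map : lin_map (f : U -> k^o).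
Proof. by move=> a u v; rewrite hf. Qed.
Lemma lf0 : f 0 = 0. Proof. exact: (lm0 lf_map). Qed.
Lemma lfD u v : f (u + v) = f u + f v. Proof. exact: (lmD lf_map). Qed.
Lemma lfZ a u : f (a *: u) = a * f u. Proof. exact: (lmZ lf_map). Qed.
Lemma lf_sum (I : Type) (r : seq I) (F : I -> U) :
  f (\sum_(i <- r) F i) = \sum_(i <- r) f (F i).
Proof. exact: (lm_sum lf_map). Qed.
End LinFun.

Lemma lm_id (U : lmodType k) : lin_map (fun u : U => u).
Proof. by []. Qed.
Lemma lm_comp (U V W : lmodType k) (f : U -> V) (g : V -> W) :
  lin_map f -> lin_map g -> lin_map (fun u => g (f u)).
Proof. by move=> hf hg a u v; rewrite hf hg. Qed.
Lemma lm_scale (U : lmodType k) (c : k) : lin_map (fun u : U => c *: u).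
Proof. by move=> a u v; rewrite scalerDr !scalerA mulrC. Qed.
Lemma lm_sumf (U W : lmodType k) (I : Type) (r : seq I) (F : I -> U -> W) :
  (forall i, lin_map (F i)) -> lin_map (fun u => \sum_(i <- r) F i u).
Proof.
move=> hF a u v; rewrite scaler_sumr -big_split /=.
by apply: eq_bigr => i _; rewrite hF.
Qed.
Lemma lm_add (U W : lmodType k) (F G : U -> W) :
  lin_map F -> lin_map G -> lin_map (fun u => F u + G u).
Proof. by move=> hF hG a u v; rewrite hF hG scalerDr addrACA. Qed.
Lemma lm_fscale (U W : lmodType k) (g : U -> k) (w : W) :
  lin_fun g -> lin_map (fun u => g u *: w).
Proof. by move=> hg a u v; rewrite hg scalerDl scalerA. Qed.
Lemma lm_scalef (U W : lmodType k) (g : U -> W) (c : k) :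
  lin_map g -> lin_map (fun u => c *: g u).
Proof. move=> hg a u v; by rewrite hg scalerDr !scalerA mulrC. Qed.
Lemma lm_mull (A : algType k) (c : A) : lin_map (fun u : A => c * u).
Proof. by move=> a u v; rewrite mulrDr scalerAr. Qed.
Lemma lm_mulr (A : algType k) (c : A) : lin_map (fun u : A => u * c).
Proof. by move=> a u v; rewrite mulrDl scalerAl. Qed.

Lemma bilin_comp (U V U' V' W : lmodType k) (b : U' -> V' -> W) (f : U -> U') (g : V -> V') :
  bilin b -> lin_map f -> lin_map g -> bilin (fun u v => b (f u) (g v)).
Proof.
move=> [h1 h2] hf hg; split=> [v|u].
- exact: (lm_comp hf (h1 (g v))).
- exact: (lm_comp hg (h2 (f u))).
Qed.
Lemma bilin_post (U V W W' : lmodType k) (b : U -> V -> W) (h : W -> W') :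
  bilin b -> lin_map h -> bilin (fun u v => h (b u v)).
Proof. by move=> [h1 h2] hh; split=> [v|u]; apply: lm_comp. Qed.

Section Teq.
Variables (U V : lmodType k).
Implicit Types s t : seq (U * V).
Lemma teq_refl s : teq s s. Proof. by []. Qed.
Lemma teq_sym s t : teq s t -> teq t s. Proof. by move=> h W b hb; rewrite h. Qed.
Lemma teq_trans s t u : teq s t -> teq t u -> teq s u.
Proof. by move=> h1 h2 W b hb; rewrite h1 // h2. Qed.
Lemma teq_cat s s' t t' : teq s s' -> teq t t' -> teq (s ++ t) (s' ++ t').
Proof. by move=> h1 h2 W b hb; rewrite !big_cat /= h1 // h2. Qed.
End Teq.

Lemma teq_map (U V U' V' : lmodType k) (f : U -> U') (g : V -> V') (s t : seq (U * V)) :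
  lin_map f -> lin_map g -> teq s t ->
  teq [seq (f p.1, g p.2) | p <- s] [seq (f p.1, g p.2) | p <- t].
Proof.
move=> hf hg h W b hb; rewrite !big_map /=.
exact: (h _ _ (bilin_comp hb hf hg)).
Qed.

Definition linR (U V W : lmodType k) (R : U -> seq (V * W)) :=
  forall a x y, teq (R (a *: x + y)) ([seq (a *: p.1, p.2) | p <- R x] ++ R y).

Lemma linR_sum (U V W X : lmodType k) (R : U -> seq (V * W)) (b : V -> W -> X) :
  linR R -> bilin b -> lin_map (fun u => \sum_(q <- R u) b q.1 q.2).
Proof.
move=> hR hb a x y; rewrite (hR _ _ _ _ _ hb) big_cat big_map /=; congr (_ + _).
rewrite scaler_sumr; apply: eq_bigr => p _.
by rewrite (lmZ (hb.1 _)).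
Qed.

Lemma linR0 (U V W : lmodType k) (R : U -> seq (V * W)) : linR R -> teq (R 0) [::].
Proof.
move=> hR X b hb; have := hR (-1) 0 0 X b hb.
rewrite scaler0 add0r big_cat big_map /= big_nil => ->.
rewrite (eq_bigr (fun p => - b p.1 p.2)) ?sumrN ?addNr // => p _.
by rewrite (lmZ (hb.1 _)) scaleN1r.
Qed.

Lemma bilin_sum (U V W : lmodType k) (I : Type) (r : seq I) (F : I -> U -> V -> W) :
  (forall i, bilin (F i)) -> bilin (fun u v => \sum_(i <- r) F i u v).
Proof.
move=> hF; split=> [v|u]; apply: lm_sumf => i; [exact: (hF i).1 | exact: (hF i).2].
Qed.

Lemma teq_prod (A B : algType k) (s s' t t' : seq (A * B)) :
  teq s s' -> teq t t' ->
  teq [seq (p.1 * q.1, p.2 * q.2) | p <- s, q <- t] [seq (p.1 * q.1, p.2 * q.2) | p <- s', q <- t'].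
Proof.
move=> h1 h2 W b hb; rewrite !big_allpairs_dep /=.
transitivity (\sum_(i <- s) \sum_(j <- t') b (i.1 * j.1) (i.2 * j.2)).
  apply: eq_bigr => p _; apply: (h2 _ (fun u v => b (p.1 * u) (p.2 * v))).
  exact: bilin_comp hb (lm_mull _) (lm_mull _).
apply: (h1 _ (fun u v => \sum_(j <- t') b (u * j.1) (v * j.2))).
apply: bilin_sum => j; exact: bilin_comp hb (lm_mulr _) (lm_mulr _).
Qed.

End Lin.

Definition subT (k : fieldType) (K : algType k) (P : {pred K}) (h : GRing.subsemialg_closed P) := {x : K | P x}.
HB.instance Definition _ (k : fieldType) (K : algType k) (P : {pred K}) (h : GRing.subsemialg_closed P) :=
  [isSub of subT h for @sval K P].
HB.instance Definition _ (k : fieldType) (K : algType k) (P : {pred K}) (h : GRing.subsemialg_closed P) :=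
  [Choice of subT h by <:].
HB.instance Definition _ (k : fieldType) (K : algType k) (P : {pred K}) (h : GRing.subsemialg_closed P) :=
  GRing.SubChoice_isSubAlgebra.Build k K P (subT h) h.

Section Proj.
Variable k : fieldType.
Variables (V : lmodType k) (P : V -> Prop).
Hypotheses (P0 : P 0) (Plin : forall a x y, P x -> P y -> P (a *: x + y)).

Let Q (C : V -> Prop) := (forall a x y, C x -> C y -> C (a *: x + y)) /\ (forall x, C x -> P x -> x = 0).

Lemma proj_exists : exists pi : V -> V, lin_map pi /\ (forall v, P (pi v)) /\ (forall v, P v -> pi v = v).
Proof.
have [A [[Acl Adis] Amax]] : exists A, Q A /\ forall B, classical_sets.proper A B -> ~ Q B.
  apply: (@classical_sets.Zorn_bigcup V Q) => F FQ Ftot; split.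
  - move=> a x y [X FX Xx] [Y FY Yy].
    have [XY|YX] := Ftot X Y FX FY.
    + exists Y => //; apply: (FQ Y FY).1 => //; exact: XY.
    + exists X => //; apply: (FQ X FX).1 => //; exact: YX.
  - by move=> x [X FX Xx] Px; apply: (FQ X FX).2.
have A0 : A 0.
  case: (pselect (A 0)) => // nA0; exfalso; apply: (Amax (fun x => x = 0)).
    rewrite /classical_sets.proper /classical_sets.subset; split.
      move=> x Ax; exfalso; apply: nA0.
      by have := Acl (-1) x x Ax Ax; rewrite scaleN1r addNr.
    by move=> /(_ 0 erefl).
  by split=> [a x y -> ->|x -> //]; rewrite scaler0 addr0.
have Psub : forall p p', P p -> P p' -> P (p - p').
  by move=> p p' Pp Pp'; have := Plin 1 (Plin (-1) Pp' P0) Pp;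
     rewrite scale1r scaleN1r addr0 addrC.
have Asub : forall u v, A u -> A v -> A (u - v).
  by move=> u v Au Av; have := Acl (-1) v u Av Au; rewrite scaleN1r addrC.
have ex : forall v, exists p, P p /\ A (v - p).
  move=> v; case: (pselect (exists p, P p /\ A (v - p))) => // nex; exfalso.
  pose B := fun z => exists c l, A c /\ z = c + l *: v.
  apply: (Amax B); last split.
  - rewrite /classical_sets.proper /classical_sets.subset; split; first by move=> x Ax; exists x, 0; rewrite scale0r addr0.
    move=> /(_ v (ex_intro _ 0 (ex_intro _ 1 (conj A0 _)))).
    rewrite add0r scale1r => /(_ erefl) Av; apply: nex; exists 0; split=> //.
    by rewrite subr0.
  - move=> a _ _ [c [l [Ac ->]]] [c' [l' [Ac' ->]]].
    exists (a *: c + c'), (a * l + l'); split; first exact: Acl.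
    by rewrite scalerDr scalerDl scalerA addrACA.
  - move=> _ [c [l [Ac ->]]] Pz.
    have [l0|l0] := eqVneq l 0.
      by rewrite l0 scale0r addr0 in Pz *; apply: Adis.
    exfalso; apply: nex; exists (l^-1 *: (c + l *: v)); split.
      by have := Plin l^-1 Pz P0; rewrite addr0.
    have -> : v - l^-1 *: (c + l *: v) = (- l^-1) *: c + 0.
      by rewrite scalerDr scalerA mulVf // scale1r addr0 scaleNr opprD addrCA subrr addr0.
    exact: Acl.
pose pi v := projT1 (cid (ex v)).
have piP v : P (pi v) /\ A (v - pi v) := projT2 (cid (ex v)).
have uniq : forall v p, P p -> A (v - p) -> pi v = p.
  move=> v p Pp Ap; have [Ppi Api] := piP v.
  apply/eqP; rewrite -subr_eq0; apply/eqP; apply: Adis; last exact: Psub.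
  have -> : pi v - p = (v - p) - (v - pi v) by rewrite opprB [RHS]addrC addrA subrK.
  exact: Asub.
exists pi; split; [|split].
- move=> a u w; apply: uniq.
    by apply: Plin; [exact: (piP u).1 | exact: (piP w).1].
  have -> : a *: u + w - (a *: pi u + pi w) = a *: (u - pi u) + (w - pi w).
    by rewrite scalerBr opprD addrACA.
  by apply: Acl; [exact: (piP u).2 | exact: (piP w).2].
- by move=> v; exact: (piP v).1.
- by move=> v Pv; apply: uniq => //; rewrite subrr.
Qed.
End Proj.

Lemma subalg_exists (k : fieldType) (K : algType k) (P : K -> Prop) :
  P 1 -> (forall a x y, P x -> P y -> P (a *: x + y)) -> (forall x y, P x -> P y -> P (x * y)) ->
  exists (S : algType k) (iota : S -> K) (pi : K -> S),
    [/\ alg_hom iota, injective iota, (forall s, P (iota s)),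
        (forall z, P z -> iota (pi z) = z) & (forall s, pi (iota s) = s) /\ lin_map pi].
Proof.
move=> P1 Plin Pmul.
have P0 : P 0 by have := Plin (-1) 1 1 P1 P1; rewrite scaleN1r addNr.
pose Pb : {pred K} := fun x => `[< P x >].
have hP : GRing.subsemialg_closed Pb.
  split.
  - by rewrite unfold_in; apply/asboolP.
  - split; first by rewrite unfold_in; apply/asboolP.
    move=> u v; rewrite !unfold_in => /asboolP Pu /asboolP Pv; apply/asboolP.
    by have := Plin 1 u v Pu Pv; rewrite scale1r.
  - move=> a u; rewrite !unfold_in => /asboolP Pu; apply/asboolP.
    by have := Plin a u 0 Pu P0; rewrite addr0.
  - move=> u v; rewrite !unfold_in => /asboolP Pu /asboolP Pv; apply/asboolP.
    exact: Pmul.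
have [pi0 [pi0lin [pi0P pi0id]]] := proj_exists P0 Plin.
have pb z : Pb (pi0 z) by rewrite /Pb; apply/asboolP.
exists (subT hP), val, (fun z => Sub (pi0 z) (pb z) : subT hP); split.
- by split; [move=> a u v | split].
- exact: val_inj.
- by move=> s; apply/asboolP; exact: (valP s).
- by move=> z Pz; rewrite SubK pi0id.
- split.
    move=> s; apply: val_inj; rewrite SubK pi0id //.
    by apply/asboolP; exact: (valP s).
  by move=> a u v; apply: val_inj => /=; rewrite pi0lin.
Qed.

Section AlgHom.
Variable k : fieldType.

Lemma ah_lin (A B : algType k) (f : A -> B) : alg_hom f -> lin_map f.
Proof. by case. Qed.
Lemma ah1 (A B : algType k) (f : A -> B) : alg_hom f -> f 1 = 1.
Proof. by case=> _ []. Qed.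
Lemma ahM (A B : algType k) (f : A -> B) : alg_hom f -> forall x y, f (x * y) = f x * f y.
Proof. by case=> _ []. Qed.
Lemma ah_comp (A B C : algType k) (f : A -> B) (g : B -> C) :
  alg_hom f -> alg_hom g -> alg_hom (fun x => g (f x)).
Proof.
move=> [hf [f1 fM]] [hg [g1 gM]]; split; first exact: lm_comp.
by split=> [|x y]; rewrite ?f1 ?g1 ?fM ?gM.
Qed.
Lemma ah_id (A : algType k) : alg_hom (fun x : A => x).
Proof. by []. Qed.
Lemma ahA (A B : algType k) (f : A -> B) : alg_hom f -> forall a, f (a%:A) = a%:A.
Proof. by move=> hf a; rewrite (lmZ (ah_lin hf)) (ah1 hf). Qed.

(* generation principle from uniqueness in a universal property *)
Lemma gen_principle (I : Type) (A : algType k) (x : I -> A)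
  (Rel : forall C : algType k, (I -> C) -> Prop) :
  (forall (C : algType k) (b : I -> C), Rel C b ->
      exists! f : A -> C, alg_hom f /\ forall i, f (x i) = b i) ->
  (forall (S C : algType k) (iota : S -> C) (b : I -> S), alg_hom iota -> injective iota ->
      Rel C (fun i => iota (b i)) -> Rel S b) ->
  Rel A x ->
  forall Q : A -> Prop, Q 1 -> (forall a u v, Q u -> Q v -> Q (a *: u + v)) ->
    (forall u v, Q u -> Q v -> Q (u * v)) -> (forall i, Q (x i)) -> forall z, Q z.
Proof.
move=> univ transf Rx Q Q1 Qlin Qmul Qx.
have [S [iota [pi [hi ii Qi ipi [pii pilin]]]]] := subalg_exists Q1 Qlin Qmul.
pose b i := pi (x i).
have ib i : iota (b i) = x i by rewrite /b ipi.
have Rb : Rel S b.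
  apply: (transf _ _ iota) => //.
  by rewrite (_ : (fun i => iota (b i)) = x) //; apply: funext => i; rewrite ib.
have [f [[hf fx] _]] := univ S b Rb.
have [f0 [_ uniq]] := univ A x Rx.
have e1 := uniq (fun z => iota (f z)) (conj (ah_comp hf hi) (fun i => etrans (congr1 iota (fx i)) (ib i))).
have e2 := uniq (fun z => z) (conj (ah_id A) (fun i => erefl)).
move=> z; have -> : z = iota (f z) by have := congr1 (fun h => h z) (etrans (esym e2) e1).
exact: Qi.
Qed.

Lemma quad_transfer n m (c : 'I_m -> 'I_n -> 'I_n -> k) (S C : algType k) (iota : S -> C) (b : 'I_n -> S) :
  alg_hom iota -> injective iota -> quad_rel c (fun i => iota (b i)) -> quad_rel c b.
Proof.
move=> hi ii hq w; apply: ii; rewrite (lm0 (ah_lin hi)) -(hq w) (lm_sum (ah_lin hi)).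
apply: eq_bigr => i _; rewrite (lm_sum (ah_lin hi)); apply: eq_bigr => j _.
by rewrite (lmZ (ah_lin hi)) (ahM hi).
Qed.

Lemma OAM_transfer n m (c : 'I_m -> 'I_n -> 'I_n -> k) (S C : algType k) (iota : S -> C) (b : 'I_n * 'I_n -> S) :
  alg_hom iota -> injective iota -> OAM_rel c (fun i j => iota (b (i, j))) -> OAM_rel c (fun i j => b (i, j)).
Proof.
move=> hi ii hq w d hd; apply: ii; rewrite (lm0 (ah_lin hi)) -(hq w d hd) (lm_sum (ah_lin hi)).
apply: eq_bigr => i _; rewrite (lm_sum (ah_lin hi)); apply: eq_bigr => j _.
rewrite (lm_sum (ah_lin hi)); apply: eq_bigr => k0 _.
rewrite (lm_sum (ah_lin hi)); apply: eq_bigr => l _.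
by rewrite (lmZ (ah_lin hi)) (ahM hi).
Qed.

Lemma quad_gen n m (c : 'I_m -> 'I_n -> 'I_n -> k) (A : algType k) (x : 'I_n -> A) :
  is_quadalg c x ->
  forall Q : A -> Prop, Q 1 -> (forall a u v, Q u -> Q v -> Q (a *: u + v)) ->
    (forall u v, Q u -> Q v -> Q (u * v)) -> (forall i, Q (x i)) -> forall z, Q z.
Proof.
move=> [hq univ]; apply: (gen_principle (Rel := fun C b => quad_rel c b)) => //.
move=> S C iota b hi ii; exact: quad_transfer.
Qed.

Lemma OAM_gen n m (c : 'I_m -> 'I_n -> 'I_n -> k) (B : algType k) (DB : B -> seq (B * B)) (eB : B -> k)
  (y : 'I_n -> 'I_n -> B) :
  is_OAM c DB eB y ->
  forall Q : B -> Prop, Q 1 -> (forall a u v, Q u -> Q v -> Q (a *: u + v)) ->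
    (forall u v, Q u -> Q v -> Q (u * v)) -> (forall i j, Q (y i j)) -> forall z, Q z.
Proof.
move=> [_ _ _ hR univ] Q Q1 Qlin Qmul Qy.
apply: (@gen_principle _ B (fun p => y p.1 p.2) (fun C b => OAM_rel c (fun i j => b (i, j)))) => //.
- move=> C b hb; have [f [[hf fy] uf]] := univ C _ hb.
  exists f; split; first by split=> // -[i j]; exact: fy.
  by move=> g [hg gy]; apply: uf; split=> // i j; exact: (gy (i, j)).
- by move=> S C iota b hi ii; exact: OAM_transfer.
Qed.

End AlgHom.

Section Mx.
Variables (k : fieldType) (n : nat) (d : 'I_n -> 'I_n -> k).

Lemma sum_ind N (a : nat) (ha : (a < N)%N) (F : 'I_N -> k) :
  \sum_(t < N) ((t : nat) == a)%:R * F t = F (Ordinal ha).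
Proof.
rewrite (bigD1 (Ordinal ha)) //= eqxx mul1r big1 ?addr0 // => t.
rewrite -val_eqE /= => /negbTE ->; by rewrite mul0r.
Qed.

Definition dn (p : nat) (q : 'I_n) : k := \sum_(a < n) ((a : nat) == p)%:R * d a q.
Lemma dnE (a q : 'I_n) : dn a q = d a q.
Proof. by rewrite /dn (sum_ind (ltn_ord a)); congr d; apply: val_inj. Qed.
Lemma dnn q : dn n q = 0.
Proof.
rewrite /dn big1 // => a _.
by rewrite (_ : ((a : nat) == n) = false) ?mul0r //; apply/negbTE; rewrite neq_ltn ltn_ord.
Qed.

Definition Xm (i : 'I_n) : 'M[k]_(n.+2) :=
  \matrix_(r, t) (if (r : nat) == 0%N then ((t : nat) == i.+1)%:R
                  else ((t : nat) == n.+1)%:R * dn r.-1 i).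

Lemma XmM i j : Xm i * Xm j = \matrix_(r, t) ((((r : nat) == 0%N) && ((t : nat) == n.+1))%:R * d i j).
Proof.
apply/matrixP => r t; rewrite -mulmxE !mxE.
have hi : (i.+1 < n.+2)%N by rewrite !ltnS ltnW.
have hn : (n.+1 < n.+2)%N by [].
case: eqP => r0 /=.
- under eq_bigr => u _ do rewrite !mxE r0 eqxx.
  rewrite (sum_ind hi) /= dnE.
  by case: (t == n.+1 :> nat); rewrite ?mul1r ?mul0r.
- under eq_bigr => u _ do rewrite !mxE (introF eqP r0) -mulrA.
  rewrite (sum_ind hn) /= dnn mulr0 mulr0.
  by rewrite mul0r.
Qed.

Lemma Xm_quad m (c : 'I_m -> 'I_n -> 'I_n -> k) : in_perp c d -> quad_rel c Xm.
Proof.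
move=> hd w; apply/matrixP => r t; rewrite !summxE mxE.
under eq_bigr => i _ do (rewrite summxE; under eq_bigr => j _ do rewrite XmM !mxE mulrCA).
under eq_bigr => i _ do rewrite -mulr_sumr.
by rewrite -mulr_sumr hd mulr0.
Qed.

Definition ev (a : nat) (M : 'M[k]_(n.+2)) : k := \sum_(t < n.+2) ((t : nat) == a)%:R * M ord0 t.

Lemma ev_lin a : lin_fun (ev a).
Proof.
move=> b M N; rewrite /ev mulr_sumr -big_split /=; apply: eq_bigr => t _.
by rewrite !mxE mulrDr mulrCA.
Qed.

Lemma ev_X (s i : 'I_n) : ev s.+1 (Xm i) = (s == i)%:R.
Proof.
have hs : (s.+1 < n.+2)%N by rewrite !ltnS ltnW.
by rewrite /ev (sum_ind hs) mxE /= eqSS.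
Qed.

Lemma ev_XX (i j : 'I_n) : ev n.+1 (Xm i * Xm j) = d i j.
Proof.
have hn : (n.+1 < n.+2)%N by [].
by rewrite /ev (sum_ind hn) XmM mxE /= eqxx mul1r.
Qed.
End Mx.

Lemma sum_enum_map (k : fieldType) (U V W : lmodType k) n (f : 'I_n -> U * V) (G : U -> V -> W) :
  \sum_(p <- [seq f s | s <- enum 'I_n]) G p.1 p.2 = \sum_(s < n) G (f s).1 (f s).2.
Proof. by rewrite big_map big_enum. Qed.

Lemma collapse (k : fieldType) (W : lmodType k) n (i : 'I_n) (F : 'I_n -> W) :
  \sum_(t < n) (i == t)%:R *: F t = F i.
Proof.
rewrite (bigD1 i) //= eqxx scale1r big1 ?addr0 // => t.
by rewrite eq_sym => /negbTE ->; rewrite scale0r.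
Qed.

Lemma collapse_mul (k : fieldType) n (i : 'I_n) (F : 'I_n -> k) :
  \sum_(t < n) (i == t)%:R * F t = F i.
Proof.
rewrite (bigD1 i) //= eqxx mul1r big1 ?addr0 // => t.
by rewrite eq_sym => /negbTE ->; rewrite mul0r.
Qed.

Section Comod.
Variables (k : fieldType) (n m : nat) (c : 'I_m -> 'I_n -> 'I_n -> k).
Variables (A : algType k) (x : 'I_n -> A) (hA : is_quadalg c x).
Variables (K : algType k) (DK : K -> seq (K * K)) (eK : K -> k) (hKb : is_bialg DK eK).
Variables (a : 'I_n -> 'I_n -> K) (rho : A -> seq (A * K)) (hrho : comod_alg DK eK rho)
  (hrhox : forall i, teq (rho (x i)) [seq (x s, a s i) | s <- enum 'I_n]).

Lemma functional_exists d : in_perp c d ->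
  exists f : A -> 'M[k]_(n.+2), alg_hom f /\ forall i, f (x i) = Xm d i.
Proof. by move=> hd; have [f [hf _]] := hA.2 _ _ (Xm_quad hd); exists f. Qed.

Lemma coef_exists : exists coef : 'I_n -> A -> k,
  (forall s, lin_fun (coef s)) /\ (forall s i, coef s (x i) = (s == i)%:R).
Proof.
have hd : in_perp c (fun _ _ => 0).
  by move=> w; apply: big1 => i _; apply: big1 => j _; rewrite mulr0.
have [f [hf fx]] := functional_exists hd.
exists (fun s u => ev s.+1 (f u)); split.
- by move=> s b u v; rewrite (ah_lin hf) ev_lin.
- by move=> s i; rewrite fx ev_X.
Qed.

Lemma delta_exists d : in_perp c d ->
  exists delta : A -> k, lin_fun delta /\ forall i j, delta (x i * x j) = d i j.
Proof.
move=> hd; have [f [hf fx]] := functional_exists hd.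
exists (fun u => ev n.+1 (f u)); split.
- by move=> b u v; rewrite (ah_lin hf) ev_lin.
- by move=> i j; rewrite (ahM hf) !fx ev_XX.
Qed.

Lemma rho_lin : linR rho. Proof. by case: hrho. Qed.
Lemma rho_mul u v : teq (rho (u * v)) [seq (p.1 * q.1, p.2 * q.2) | p <- rho u, q <- rho v].
Proof. by case: hrho. Qed.

Lemma rho_x_sum (W : lmodType k) (b : A -> K -> W) i : bilin b ->
  \sum_(p <- rho (x i)) b p.1 p.2 = \sum_(s < n) b (x s) (a s i).
Proof. by move=> hb; rewrite (@hrhox i W b hb) sum_enum_map. Qed.

Lemma eK_a i j : eK (a i j) = (i == j)%:R.
Proof.
have [coef [hcoef cx]] := coef_exists.
have [_ [heK _ _] _] := hKb.
have hb : bilin (fun (u : A) (v : K) => eK v *: u).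
  by split=> [v|u]; [exact: lm_scale | exact: lm_fscale].
have e := hrho.
case: e => _ _ _ _ /(_ (x j)); rewrite (rho_x_sum j hb) => /(congr1 (coef i)).
rewrite (lf_sum (hcoef i)) cx.
under eq_bigr => s _ do rewrite (lfZ (hcoef i)) cx mulrC.
by rewrite collapse_mul.
Qed.

Lemma DK_lin : linR DK. Proof. by case: hKb => -[]. Qed.

Lemma DK_a i j : teq (DK (a i j)) [seq (a i s, a s j) | s <- enum 'I_n].
Proof.
move=> W b hb; rewrite sum_enum_map /=.
have [coef [hcoef cx]] := coef_exists.
case: hrho => _ _ _ /(_ (x j)) hco _.
pose tau := fun (u : A) (v w : K) => coef i u *: b v w.
have htau : trilin tau.
  split; [|split] => [v w|u w|u v].
  - exact: lm_fscale.
  - exact: lm_scalef (hb.1 w).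
  - exact: lm_scalef (hb.2 v).
have := hco W tau htau; rewrite !big_allpairs_dep /=.
pose G := fun (u : A) (v : K) => \sum_(q <- rho u) tau q.1 q.2 v.
have hG : bilin G.
  split=> [v|u].
  - apply: (linR_sum (b := fun u' v' => tau u' v' v)) rho_lin _.
    by split=> [v'|u']; [exact: lm_fscale | exact: lm_scalef (hb.1 v)].
  - by apply: lm_sumf => q; exact: lm_scalef (hb.2 _).
pose G' := fun (u : A) (v : K) => coef i u *: \sum_(q <- DK v) b q.1 q.2.
have hG' : bilin G'.
  split=> [v|u]; first exact: lm_fscale.
  exact: lm_scalef (linR_sum DK_lin hb).
rewrite -/(G _ _).
rewrite (_ : \sum_(i0 <- rho (x j)) G i0.1 i0.2 = \sum_(s < n) G (x s) (a s j)); last first.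
  exact: rho_x_sum.
rewrite (_ : \sum_(i0 <- rho (x j)) \sum_(j0 <- DK i0.2) tau i0.1 j0.1 j0.2 =
             \sum_(i0 <- rho (x j)) G' i0.1 i0.2); last first.
  by apply: eq_bigr => p _; rewrite /G' /tau scaler_sumr.
rewrite rho_x_sum // /G' /G => e.
have e2 : \sum_(s < n) coef i (x s) *: \sum_(q <- DK (a s j)) b q.1 q.2 = \sum_(p <- DK (a i j)) b p.1 p.2.
  by under eq_bigr => s _ do rewrite cx; rewrite collapse.
rewrite -e2 -e; apply: eq_bigr => s _.
rewrite (rho_x_sum s (b := fun u v => tau u v (a s j))); last first.
  by split=> [v|u]; [exact: lm_fscale | exact: lm_scalef (hb.1 _)].
rewrite /tau.
under eq_bigr => t _ do rewrite cx.
by rewrite collapse.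
Qed.

Lemma OAM_a : OAM_rel c a.
Proof.
move=> w d hd.
have [delta [hdel dx]] := delta_exists hd.
have hb : bilin (fun (u : A) (v : K) => delta u *: v).
  by split=> [v|u]; [exact: lm_fscale | exact: lm_scale].
have hL := linR_sum rho_lin hb.
have Lxx : forall i j, \sum_(q <- rho (x i * x j)) delta q.1 *: q.2 =
    \sum_(s < n) \sum_(t < n) d s t *: (a s i * a t j).
  move=> i j; rewrite (rho_mul (x i) (x j) hb).
  rewrite (teq_prod (@hrhox i) (@hrhox j) hb) big_allpairs_dep big_map big_enum /=.
  apply: eq_bigr => s _; rewrite big_map big_enum /=.
  by apply: eq_bigr => t _; rewrite dx.
have := congr1 (fun u => \sum_(q <- rho u) delta q.1 *: q.2) (hA.1 w).
rewrite /= (lm_sum hL) (linR0 rho_lin hb) big_nil.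
move=> e; rewrite -[RHS]e; apply: eq_bigr => i _; rewrite (lm_sum hL); apply: eq_bigr => j _.
rewrite (lmZ hL) Lxx.
rewrite scaler_sumr; apply: eq_bigr => s _.
rewrite scaler_sumr; apply: eq_bigr => t _.
by rewrite scalerA.
Qed.

End Comod.

Section HomComp.
Variable k : fieldType.

Lemma trilin_comp (U V X U' V' X' W : lmodType k) (b : U' -> V' -> X' -> W)
  (f : U -> U') (g : V -> V') (h : X -> X') :
  trilin b -> lin_map f -> lin_map g -> lin_map h ->
  trilin (fun u v w => b (f u) (g v) (h w)).
Proof.
move=> [h1 [h2 h3]] hf hg hh; split; [|split] => [v w|u w|u v].
- exact: (lm_comp hf (h1 _ _)).
- exact: (lm_comp hg (h2 _ _)).
- exact: (lm_comp hh (h3 _ _)).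
Qed.

Lemma map_pair_comp (T1 T2 T3 : Type) (f g : T1 -> T2) (f' g' : T2 -> T3) (s : seq (T1 * T1)) :
  [seq (f' p.1, g' p.2) | p <- [seq (f p.1, g p.2) | p <- s]] = [seq (f' (f p.1), g' (g p.2)) | p <- s].
Proof. by rewrite -map_comp. Qed.

Lemma bialg_hom_comp (A B C : algType k) DA eA DB eB DC eC (f : A -> B) (g : B -> C) :
  bialg_hom DA eA DB eB f -> bialg_hom DB eB DC eC g -> bialg_hom DA eA DC eC (fun x => g (f x)).
Proof.
move=> [hf [Df ef]] [hg [Dg eg]]; split; first exact: ah_comp.
split=> [x|x]; last by rewrite eg ef.
apply: teq_trans (Dg (f x)) _.
by have := teq_map (ah_lin hg) (ah_lin hg) (Df x); rewrite map_pair_comp.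
Qed.

Lemma hopf_hom_comp (A B C : algType k) DA eA SA DB eB SB DC eC SC (f : A -> B) (g : B -> C) :
  hopf_hom DA eA SA DB eB SB f -> hopf_hom DB eB SB DC eC SC g ->
  hopf_hom DA eA SA DC eC SC (fun x => g (f x)).
Proof.
move=> [hf Sf] [hg Sg]; split; first exact: bialg_hom_comp hf hg.
by move=> x; rewrite Sf Sg.
Qed.
End HomComp.

Section SubHopf.
Variables (k : fieldType) (K : algType k) (DK : K -> seq (K * K)) (eK : K -> k) (SK : K -> K).
Variables (hK : is_hopf DK eK SK) (P : K -> Prop) (hP : hopf_sub DK eK SK P).

Lemma sP1 : P 1. Proof. by case: hP. Qed.
Lemma sPlin a x y : P x -> P y -> P (a *: x + y). Proof. by case: hP => _ h _ _ _; apply: h. Qed.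
Lemma sPmul x y : P x -> P y -> P (x * y). Proof. by case: hP => _ _ h _ _; apply: h. Qed.
Lemma sPS x : P x -> P (SK x). Proof. by case: hP => _ _ _ h _; apply: h. Qed.
Lemma sPD x : P x -> exists t, teq (DK x) t /\ forall p, p \in t -> P p.1 /\ P p.2.
Proof. by case: hP => _ _ _ _ h; apply: h. Qed.
Lemma sP0 : P 0. Proof. by have := sPlin (-1) sP1 sP1; rewrite scaleN1r addNr. Qed.

Definition sPb : {pred K} := fun x => `[< P x >].
Lemma hsPb : GRing.subsemialg_closed sPb.
Proof.
split.
- by rewrite unfold_in; apply/asboolP; exact: sP1.
- split; first by rewrite unfold_in; apply/asboolP; exact: sP0.
  move=> u v; rewrite !unfold_in => /asboolP Pu /asboolP Pv; apply/asboolP.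
  by have := sPlin 1 Pu Pv; rewrite scale1r.
- move=> a u; rewrite !unfold_in => /asboolP Pu; apply/asboolP.
  by have := sPlin a Pu sP0; rewrite addr0.
- move=> u v; rewrite !unfold_in => /asboolP Pu /asboolP Pv; apply/asboolP.
  exact: sPmul.
Qed.

Local Notation S := (subT hsPb).
Definition iota (s : S) : K := val s.
Lemma iotaP s : P (iota s). Proof. by apply/asboolP; exact: (valP s). Qed.
Lemma iota_alg : alg_hom iota. Proof. by split; [move=> a u v | split]. Qed.
Lemma iota_inj : injective iota. Proof. exact: val_inj. Qed.
Lemma iota_lin : lin_map iota. Proof. exact: ah_lin iota_alg. Qed.

Definition pi0 : K -> K := projT1 (cid (proj_exists sP0 sPlin)).
Lemma pi0_spec : lin_map pi0 /\ (forall v, P (pi0 v)) /\ (forall v, P v -> pi0 v = v).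
Proof. exact: (projT2 (cid (proj_exists sP0 sPlin))). Qed.
Lemma pb z : sPb (pi0 z). Proof. by rewrite /sPb; apply/asboolP; exact: pi0_spec.2.1. Qed.
Definition spi (z : K) : S := Sub (pi0 z) (pb z).
Lemma iota_pi z : P z -> iota (spi z) = z.
Proof. by move=> Pz; rewrite /iota /spi SubK; apply: pi0_spec.2.2. Qed.
Lemma pi_iota s : spi (iota s) = s.
Proof. by apply: iota_inj; rewrite iota_pi //; exact: iotaP. Qed.
Lemma pi_lin : lin_map spi.
Proof. by move=> a u v; apply: iota_inj; rewrite iota_lin /iota /spi !SubK pi0_spec.1. Qed.

Lemma teqS (L1 L2 : seq (S * S)) :
  teq [seq (iota p.1, iota p.2) | p <- L1] [seq (iota p.1, iota p.2) | p <- L2] -> teq L1 L2.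
Proof.
move=> h W b hb; have := h W _ (bilin_comp hb pi_lin pi_lin).
by rewrite !big_map /=; under eq_bigr => p _ do rewrite !pi_iota; under [in RHS]eq_bigr => p _ do rewrite !pi_iota.
Qed.

Lemma teq3S (L1 L2 : seq (S * S * S)) :
  teq3 [seq (iota p.1.1, iota p.1.2, iota p.2) | p <- L1] [seq (iota p.1.1, iota p.1.2, iota p.2) | p <- L2] ->
  teq3 L1 L2.
Proof.
move=> h W b hb; have := h W _ (trilin_comp hb pi_lin pi_lin pi_lin).
by rewrite !big_map /=; under eq_bigr => p _ do rewrite !pi_iota; under [in RHS]eq_bigr => p _ do rewrite !pi_iota.
Qed.

Definition tS (s : S) : seq (K * K) := projT1 (cid (sPD (iotaP s))).
Lemma tS_spec s : teq (DK (iota s)) (tS s) /\ forall p, p \in tS s -> P p.1 /\ P p.2.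
Proof. exact: (projT2 (cid (sPD (iotaP s)))). Qed.

Fact DS_key : unit. Proof. exact: tt. Qed.
Definition DS : S -> seq (S * S) := locked_with DS_key (fun s => [seq (spi p.1, spi p.2) | p <- tS s]).
Lemma DSE s : DS s = [seq (spi p.1, spi p.2) | p <- tS s].
Proof. by rewrite /DS unlock. Qed.
Definition eS (s : S) : k := eK (iota s).
Definition SS (s : S) : S := spi (SK (iota s)).

Lemma mapDS s : [seq (iota p.1, iota p.2) | p <- DS s] = tS s.
Proof.
rewrite DSE -map_comp; rewrite -[RHS]map_id; apply/eq_in_map => p /(tS_spec s).2 [P1 P2] /=.
by rewrite !iota_pi //; case: p P1 P2.
Qed.

Lemma DS_DK s : teq (DK (iota s)) [seq (iota p.1, iota p.2) | p <- DS s].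
Proof. by rewrite mapDS; exact: (tS_spec s).1. Qed.

Lemma sum_DS (W : lmodType k) (G : K -> K -> W) s : bilin G ->
  \sum_(p <- DS s) G (iota p.1) (iota p.2) = \sum_(p <- DK (iota s)) G p.1 p.2.
Proof.
move=> hG; rewrite -(big_map (fun p => (iota p.1, iota p.2)) xpredT (fun p => G p.1 p.2)) /=.
by rewrite mapDS; symmetry; apply: (tS_spec s).1.
Qed.

Lemma iota_SS s : iota (SS s) = SK (iota s).
Proof. by rewrite iota_pi //; apply: sPS; exact: iotaP. Qed.

Lemma hKbi : is_bialg DK eK. Proof. by case: hK. Qed.
Lemma DKlin : linR DK. Proof. by case: hKbi => -[]. Qed.

Lemma subhopf_is_hopf : is_hopf DS eS SS.
Proof.
have [[DKl DKm DK1 DKco] [heK eK1 eKm] DKcu] := hKbi.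
have [_ [hSK hSKa]] := hK.
split; [split; [split|split|]|split].
- move=> a u v; apply: teqS => W b hb; rewrite !big_map /= big_cat /= big_map /=.
  rewrite (sum_DS _ hb) iota_lin (DKl a _ _ _ _ hb) big_cat big_map /=; congr (_ + _).
    under [RHS]eq_bigr => p _ do rewrite (lmZ iota_lin).
    symmetry; exact: (sum_DS (G := fun x y => b (a *: x) y) u (bilin_comp hb (lm_scale a) (@lm_id _ _))).
  by symmetry; exact: sum_DS.
- move=> u v; apply: teqS => W b hb; rewrite !big_map /= big_allpairs_dep /=.
  rewrite (sum_DS _ hb) (ahM iota_alg) (DKm _ _ _ _ hb) big_allpairs_dep /=.
  under [RHS]eq_bigr => p _ do (under eq_bigr => q _ do rewrite !(ahM iota_alg)).
  under [RHS]eq_bigr => p _ do rewrite (sum_DS _ (bilin_comp hb (lm_mull (iota p.1)) (lm_mull (iota p.2)))).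
  symmetry; apply: (sum_DS (G := fun x y => \sum_(q <- DK (iota v)) b (x * q.1) (y * q.2))).
  by apply: bilin_sum => q; exact: bilin_comp hb (lm_mulr _) (lm_mulr _).
- apply: teqS => W b hb; rewrite big_map /= (sum_DS _ hb) (ah1 iota_alg) (DK1 _ _ hb) !big_seq1 /=.
  by congr b; symmetry; exact: (ah1 iota_alg).
- move=> u; apply: teq3S => W t ht; rewrite !big_map /= !big_allpairs_dep /=.
  have := DKco (iota u) W t ht; rewrite !big_allpairs_dep /= => e.
  transitivity (\sum_(p <- DS u) (fun a b => \sum_(q <- DK a) t q.1 q.2 b) (iota p.1) (iota p.2)).
    apply: eq_bigr => p _ /=.
    apply: (sum_DS (G := fun a b => t a b (iota p.2))).
    by split=> [v|a]; [exact: ht.1 | exact: ht.2.1].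
  rewrite (sum_DS (G := fun a b => \sum_(q <- DK a) t q.1 q.2 b)); last first.
    split=> [v|a].
      apply: (linR_sum (b := fun x y => t x y v)) DKlin _.
      by split=> [w|x]; [exact: ht.1 | exact: ht.2.1].
    by apply: lm_sumf => q; exact: (ht.2.2).
  rewrite /= e.
  transitivity (\sum_(p <- DS u) (fun a b => \sum_(q <- DK b) t a q.1 q.2) (iota p.1) (iota p.2)); last first.
    apply: eq_bigr => p _ /=; symmetry.
    apply: (sum_DS (G := fun a b => t (iota p.1) a b)).
    by split=> [v|a]; [exact: ht.2.1 | exact: ht.2.2].
  rewrite (sum_DS (G := fun a b => \sum_(q <- DK b) t a q.1 q.2)) //; split=> [v|a].
    by apply: lm_sumf => q; exact: (ht.1).
  apply: (linR_sum (b := fun x y => t a x y)) DKlin _.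
  by split=> [v|x]; [exact: ht.2.1 | exact: ht.2.2].
- by move=> a u v; rewrite /eS iota_lin heK.
- by rewrite /eS (ah1 iota_alg).
- by move=> u v; rewrite /eS (ahM iota_alg).
- move=> u; split; apply: iota_inj; rewrite (lm_sum iota_lin);
    under eq_bigr => p _ do rewrite (lmZ iota_lin).
  + rewrite /eS (sum_DS (G := fun a b => eK a *: b)); first by case: (DKcu (iota u)).
    by split=> [v|a]; [exact: lm_fscale | exact: lm_scale].
  + rewrite /eS (sum_DS (G := fun a b => eK b *: a)); first by case: (DKcu (iota u)).
    by split=> [v|a]; [exact: lm_scale | exact: lm_fscale].
- by move=> a u v; apply: iota_inj; rewrite iota_lin !iota_SS iota_lin hSK.
- move=> u; split; apply: iota_inj; rewrite (lm_sum iota_lin) (ahA iota_alg);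
    under eq_bigr => p _ do rewrite (ahM iota_alg) iota_SS.
  + rewrite (sum_DS (G := fun a b => SK a * b)); first by case: (hSKa (iota u)).
    by split=> [v|a]; [exact: lm_comp hSK (lm_mulr _) | exact: lm_mull].
  + rewrite (sum_DS (G := fun a b => a * SK b)); first by case: (hSKa (iota u)).
    by split=> [v|a]; [exact: lm_mulr | exact: lm_comp hSK (lm_mull _)].
Qed.

Lemma iota_hopf : hopf_hom DS eS SS DK eK SK iota.
Proof.
split; last exact: iota_SS.
split; first exact: iota_alg.
by split=> // s; exact: DS_DK.
Qed.

End SubHopf.

Lemma subhopf_exists (k : fieldType) (K : algType k) (DK : K -> seq (K * K)) (eK : K -> k) (SK : K -> K)
  (hK : is_hopf DK eK SK) (P : K -> Prop) (hP : hopf_sub DK eK SK P) :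
  exists (S : algType k) (DS : S -> seq (S * S)) (eS : S -> k) (SS : S -> S) (io : S -> K) (pj : K -> S),
    [/\ is_hopf DS eS SS, hopf_hom DS eS SS DK eK SK io, injective io, (forall s, P (io s)) &
      (forall z, P z -> io (pj z) = z) /\
      (forall L1 L2 : seq (S * S), teq [seq (io p.1, io p.2) | p <- L1] [seq (io p.1, io p.2) | p <- L2] -> teq L1 L2)].
Proof.
exists (subT (hsPb hP)), (@DS _ _ _ _ _ _ hP), (@eS _ _ _ _ _ _ hP), (@SS _ _ _ _ _ _ hP),
  (@iota _ _ _ _ _ _ hP), (spi hP); split.
- exact: subhopf_is_hopf.
- exact: iota_hopf.
- exact: iota_inj.
- exact: iotaP.
- by split; [exact: iota_pi | exact: teqS].
Qed.

Lemma bialg_closure (k : fieldType) (B K : algType k) DB eB DK eK (g : B -> K) :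
  is_bialg DB eB -> is_bialg DK eK -> alg_hom g ->
  let Q := fun b => teq (DK (g b)) [seq (g p.1, g p.2) | p <- DB b] /\ eK (g b) = eB b in
  [/\ Q 1, (forall a u v, Q u -> Q v -> Q (a *: u + v)) & (forall u v, Q u -> Q v -> Q (u * v))].
Proof.
move=> [[DBl DBm DB1 _] [heB eB1 eBm] _] [[DKl DKm DK1 _] [heK eK1 eKm] _] hg Q.
have lg := ah_lin hg.
split.
- split; last by rewrite (ah1 hg) eK1 eB1.
  move=> W b hb; rewrite (ah1 hg) (DK1 _ _ hb) big_seq1 big_map /=.
  by rewrite (DB1 _ _ (bilin_comp hb lg lg)) big_seq1 /= (ah1 hg).
- move=> a u v [Du eu] [Dv ev]; split; last by rewrite lg heK eu ev heB.
  move=> W b hb; rewrite lg (DKl _ _ _ _ _ hb) big_cat big_map /=.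
  rewrite (Du _ _ (bilin_comp hb (lm_scale a) (@lm_id _ _))) (Dv _ _ hb).
  rewrite big_map (DBl _ _ _ _ _ (bilin_comp hb lg lg)) big_cat !big_map /=.
  congr (_ + _); apply: eq_bigr => p _; by rewrite (lmZ lg).
- move=> u v [Du eu] [Dv ev]; split; last by rewrite (ahM hg) eKm eu ev eBm.
  move=> W b hb; rewrite (ahM hg) (DKm _ _ _ _ hb) (teq_prod Du Dv hb).
  rewrite big_map (DBm _ _ _ _ (bilin_comp hb lg lg)) !big_allpairs_dep /=.
  rewrite big_map; apply: eq_bigr => p _; rewrite big_map; apply: eq_bigr => q _ /=.
  by rewrite !(ahM hg).
Qed.

Lemma P_sum (k : fieldType) (K : algType k) (P : K -> Prop) (T : eqType) (t : seq T) (l : T -> k) (F : T -> K) :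
  P 0 -> (forall a x y, P x -> P y -> P (a *: x + y)) -> (forall p, p \in t -> P (F p)) ->
  P (\sum_(p <- t) l p *: F p).
Proof.
move=> P0 Plin; elim: t => [|q t IH] h; first by rewrite big_nil.
rewrite big_cons; apply: Plin; first by apply: h; rewrite inE eqxx.
by apply: IH => p pt; apply: h; rewrite inE pt orbT.
Qed.

Unset Implicit Arguments. Set Strict Implicit.

Theorem lemma2p7 (k : fieldType) (n m : nat) (c : 'I_m -> 'I_n -> 'I_n -> k)
  (c_indep : forall l : 'I_m -> k,
      (forall i j, \sum_(w < m) l w * c w i j = 0) -> forall w, l w = 0)
  (A : algType k) (x : 'I_n -> A) (hA : is_quadalg c x)
  (B : algType k) (DB : B -> seq (B * B)) (eB : B -> k) (y : 'I_n -> 'I_n -> B)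
  (hB : is_OAM c DB eB y)
  (H : algType k) (DH : H -> seq (H * H)) (eH : H -> k) (SH : H -> H) (phi : B -> H)
  (hH : is_hopf_env DB eB DH eH SH phi)
  (K : algType k) (DK : K -> seq (K * K)) (eK : K -> k) (SK : K -> K)
  (hK : is_hopf DK eK SK)
  (a : 'I_n -> 'I_n -> K) (rho : A -> seq (A * K))
  (hrho : comod_alg DK eK rho)
  (hrhox : forall i, teq (rho (x i)) [seq (x s, a s i) | s <- enum 'I_n]) :
  inner_faithful DK eK SK rho <->
  exists f : H -> K, hopf_hom DH eH SH DK eK SK f /\
    (forall i j, f (phi (y i j)) = a i j) /\ (forall z : K, exists h : H, f h = z).
Proof.
have hKb : is_bialg DK eK by case: hK.
have [hBb DBy eBy hRy univB] := hB.
have [hHh hphi envH] := hH.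
have [coef [hcoef cx]] := coef_exists hA.
split.
- move=> IF.
  have [g [[hg gy] _]] := univB K a (OAM_a hA hrho hrhox).
  have hgb : bialg_hom DB eB DK eK g.
    have [Q1 Qlin Qmul] := bialg_closure hBb hKb hg.
    have Qy : forall i j, (teq (DK (g (y i j))) [seq (g p.1, g p.2) | p <- DB (y i j)] /\
                           eK (g (y i j)) = eB (y i j)).
      move=> i j; split; last by rewrite gy eBy (eK_a hA hKb hrho hrhox).
      rewrite gy; apply: teq_trans (DK_a hA hKb hrho hrhox i j) _.
      apply: teq_sym; apply: teq_trans (teq_map (ah_lin hg) (ah_lin hg) (DBy i j)) _.
      have -> : [seq (g p.1, g p.2) | p <- [seq (y i s, y s j) | s <- enum 'I_n]] =
                [seq (a i s, a s j) | s <- enum 'I_n].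
        by rewrite -map_comp; apply: eq_map => s /=; rewrite !gy.
      exact: teq_refl.
    have Qall := OAM_gen hB (Q := fun b => teq (DK (g b)) [seq (g p.1, g p.2) | p <- DB b] /\
                                         eK (g b) = eB b) Q1 Qlin Qmul Qy.
    by split=> //; split=> b; case: (Qall b).
  have [f [[hf fphi] _]] := envH K DK eK SK hK g hgb.
  exists f; split=> //; split; first by move=> i j; rewrite fphi gy.
  have [[hfa [Df ef]] Sf] := hf.
  pose Pim z := exists w, f w = z.
  have hsub : hopf_sub DK eK SK Pim.
    split.
    - by exists 1; rewrite (ah1 hfa).
    - move=> b _ _ [u <-] [v <-]; exists (b *: u + v); exact: (ah_lin hfa).
    - move=> _ _ [u <-] [v <-]; exists (u * v); exact: (ahM hfa).
    - move=> _ [u <-]; exists (SH u); exact: Sf.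
    - move=> _ [u <-]; exists [seq (f p.1, f p.2) | p <- DH u]; split; first exact: Df.
      by move=> p /mapP [q _ ->]; split; eexists.
  have Htin : forall z, tin_right (rho z) Pim.
    apply: (quad_gen hA).
    + exists [:: (1, 1)]; split; first by case: hrho.
      by move=> p; rewrite inE => /eqP -> /=; exists 1; rewrite (ah1 hfa).
    + move=> b u v [tu [Tu Pu]] [tv [Tv Pv]].
      exists ([seq (b *: p.1, p.2) | p <- tu] ++ tv); split.
        apply: teq_trans (rho_lin hrho b u v) _.
        by apply: teq_cat => //; exact: teq_map (lm_scale b) (@lm_id _ _) Tu.
      move=> p; rewrite mem_cat => /orP [/mapP [q qin ->]|pin]; [exact: Pu qin | exact: Pv].
    + move=> u v [tu [Tu Pu]] [tv [Tv Pv]].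
      exists [seq (p.1 * q.1, p.2 * q.2) | p <- tu, q <- tv]; split.
        by apply: teq_trans (rho_mul hrho u v) _; exact: teq_prod.
      move=> p /allpairsPdep [p1 [p2 [p1in p2in ->]]] /=.
      have [w1 e1] := Pu _ p1in; have [w2 e2] := Pv _ p2in.
      by exists (w1 * w2); rewrite (ahM hfa) e1 e2.
    + move=> i; exists [seq (x s, a s i) | s <- enum 'I_n]; split; first exact: hrhox.
      by move=> p /mapP [s _ ->] /=; exists (phi (y s i)); rewrite fphi gy.
  move=> z; case: (pselect (Pim z)) => // nz; exfalso.
  exact: (IF Pim hsub (ex_intro _ z nz) Htin).
- move=> [f [hf [fa fsurj]]] P hsub [z nz] Htin.
  have [[hfa [Df ef]] Sf] := hf.
  have [P1 Plin Pmul PS PD] := hsub.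
  have P0 : P 0 by have := Plin (-1) 1 1 P1 P1; rewrite scaleN1r addNr.
  have Pa : forall s i, P (a s i).
    move=> s i; have [t [Tt Pt]] := Htin (x i).
    have hb : bilin (fun (u : A) (v : K) => coef s u *: v).
      by split=> [v|u]; [exact: lm_fscale | exact: lm_scale].
    have := Tt K _ hb; rewrite (rho_x_sum hrhox i hb).
    under eq_bigr => u _ do rewrite cx.
    rewrite collapse => ->.
    by apply: P_sum => // p pt; exact: Pt.
  have hphia : alg_hom phi by case: hphi.
  have hfp : alg_hom (fun b => f (phi b)) := ah_comp hphia hfa.
  have Pfphi : forall b, P (f (phi b)).
    apply: (OAM_gen hB (Q := fun b => P (f (phi b)))).
    + by rewrite /= (ah1 hfp).
    + by move=> b u v Pu Pv /=; rewrite (ah_lin hfp); exact: Plin.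
    + by move=> u v Pu Pv /=; rewrite (ahM hfp); exact: Pmul.
    + by move=> i j /=; rewrite fa.
  have [S [DS [eS [SS [io [pj [hS hio ioinj ioP [iopj teqS']]]]]]]] := subhopf_exists hK hsub.
  pose gS b := pj (f (phi b)).
  have iog b : io (gS b) = f (phi b) by rewrite /gS iopj.
  have [[ioa [Dio eio]] _] := hio.
  have hgS : alg_hom gS.
    split; [|split].
    - by move=> b u v; apply: ioinj; rewrite (ah_lin ioa) !iog (ah_lin hfp).
    - by apply: ioinj; rewrite iog (ah1 ioa) (ah1 hfp).
    - by move=> u v; apply: ioinj; rewrite (ahM ioa) !iog (ahM hfp).
  have [_ [Dfphi efphi]] := bialg_hom_comp hphi hf.1.
  have hgSb : bialg_hom DB eB DS eS gS.
    split=> //; split=> b.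
    + apply: teqS'.
      apply: teq_trans (teq_sym (Dio (gS b))) _; rewrite iog.
      apply: teq_trans (Dfphi b) _.
      rewrite map_pair_comp; under [in X in teq _ X]eq_map => p do rewrite !iog.
      exact: teq_refl.
    + by rewrite -eio iog efphi.
  have [h [[hh hphih] _]] := envH S DS eS SS hS gS hgSb.
  have [f0 [_ uniq]] := envH K DK eK SK hK _ (bialg_hom_comp hphi hf.1).
  have e1 := uniq f (conj hf (fun b => erefl)).
  have ok2 : forall b, io (h (phi b)) = f (phi b) by move=> b; rewrite hphih iog.
  have e2 := uniq (fun w => io (h w)) (conj (hopf_hom_comp hh hio) ok2).
  have [w fw] := fsurj z.
  apply: nz; rewrite -fw.
  have := congr1 (fun F => F w) (etrans (esym e1) e2) => /= ->.
  exact: ioP.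
Qed.
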